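(* Let $f=a_0+ a_{1}z+\cdots+a_m z^m\in \mathbb{Z}[z]$ be primitive (the greatest common divisor of its coefficients is $1$). Suppose there exist positive real numbers $\alpha<\beta$ and an index $j\in \{0,1,\ldots,m\}$ such that \[ |a_j| \alpha^j>\sum_{i=0,\, i\neq j}^{m} |a_i|\beta^{i}. \] If there exist natural numbers $n$ and $d$ with $\beta-d\geq n\geq \alpha+d$ such that either $|f(n)|/d$ is a prime, or $|f(n)|/d$ is a prime power coprime to $|f'(n)|$, then $f$ is irreducible in $\mathbb{Z}[z]$.
   Context: $f'$ denotes the derivative of $f$. Natural numbers are positive integers. *)

(* Defs.v *)
From HB Require Import structures.
From mathcomp Require Export all_boot all_order all_algebra.
From mathcomp Require Export reals.
Set Implicit Arguments. Unset Strict Implicit. Unset Printing Implicit Defensive.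
Import Order.TTheory GRing.Theory Num.Theory.
Local Open Scope ring_scope.

Definition primitive_poly (f : {poly int}) : Prop :=
  \big[gcdn/0%N]_(i < size f) absz (f`_i) = 1%N.

Definition irreducible_Zpoly (f : {poly int}) : Prop :=
  f != 0 /\ f \isn't a GRing.unit /\
  forall g h : {poly int}, f = g * h -> g \is a GRing.unit \/ h \is a GRing.unit.

(* Main.v *)
Require Import Defs.
From HB Require Import structures.
From mathcomp Require Import all_boot all_order all_algebra reals.
From mathcomp Require Import algC zify ring lra.
Import Order.TTheory GRing.Theory Num.Theory.
Local Open Scope ring_scope.
Set Implicit Arguments.
Lemma root_far (f : {poly int}) (j A B : nat) (jlt : (j < size f)%N) :
  \sum_(i < size f | i != j :> nat) `|f`_i| * (B%:Z) ^+ i < `|f`_j| * (A%:Z) ^+ j ->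
  forall z : algC, root (map_poly intr f) z -> `|z| < A%:R \/ B%:R < `|z|.
Proof.
move=> H z rz.
have Rz : `|z| \is Num.real by apply: normr_real.
case: (boolP (`|z| < A%:R)) => [h|]; first by left.
rewrite -real_leNgt ?realn // => hA.
case: (boolP (B%:R < `|z|)) => [h|]; first by right.
rewrite -real_leNgt ?realn // => hB.
exfalso.
have E : \sum_(i < size f) (f`_i)%:~R * z ^+ i = 0 :> algC.
  move/eqP: rz; rewrite (@horner_coef_wide _ (size f)).
    by under eq_bigr => i _ do rewrite coef_map.
  by rewrite size_map_inj_poly //; apply: intr_inj.
rewrite (bigD1 (Ordinal jlt)) //= in E.
move/eqP: E; rewrite addr_eq0 => /eqP E.
have := congr1 (@Num.norm _ algC) E; rewrite normrN normrM normrX -intr_norm => E2.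
move: H; rewrite -(ltr_int algC) rmorph_sum /= rmorphM rmorphXn /= => H.
have : `|\sum_(i < size f | i != Ordinal jlt) ((f`_i)%:~R * z ^+ i)| <= 
  \sum_(i < size f | i != j :> nat) (`|f`_i| * (B%:Z) ^+ i)%:~R :> algC.
  apply: le_trans (ler_norm_sum _ _ _) _.
  apply: ler_sum => i _.
  rewrite normrM normrX -intr_norm rmorphM rmorphXn /=.
  apply: ler_wpM2l; first by rewrite ler0z.
  by apply: lerXn2r => //; rewrite ?nnegrE ?ler0n.
rewrite -E2 => H2.
have H3 : `|f`_j|%:~R * A%:~R ^+ j <= `|f`_j|%:~R * `|z| ^+ j :> algC.
  apply: ler_wpM2l; first by rewrite ler0z.
  by apply: lerXn2r => //; rewrite ?nnegrE ?ler0n.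
have := lt_le_trans (le_lt_trans H2 H) H3.
by rewrite ltxx.
Qed.
Lemma factor_big (f g h : {poly int}) (n d : nat) : f = g * h -> (1 < size g)%N -> (0 < d)%N ->
  (forall z : algC, root (map_poly intr f) z -> d%:R < `|n%:R - z|) -> (d < `|g.[n%:Z]|)%N.
Proof.
move=> fE sg d0 Hr.
set G := map_poly intr g : {poly algC}.
have [r Dr] := closed_field_poly_normal G.
have hg : (g.[n%:Z])%:~R = G.[n%:R] by rewrite -horner_map.
have rootsG : forall z, z \in r -> d%:R < `|n%:R - z| :> algC.
  move=> z zr; apply: Hr.
  rewrite fE rmorphM /= rootM; apply/orP; left.
  rewrite -/G Dr /root hornerZ mulf_eq0; apply/orP; right.
  by rewrite -/(root _ z) root_prod_XsubC.
have sG : size G = size g by rewrite size_map_inj_poly //; apply: intr_inj.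
have lc1 : 1 <= `|lead_coef G|.
  rewrite lead_coef_map_inj //; last by apply: intr_inj.
  rewrite -intr_norm -[1](mulr1z) ler_int.
  rewrite -gtz0_ge1 normr_gt0 lead_coef_eq0 -size_poly_eq0.
  by case: (size g) sg.
move: hg; rewrite Dr hornerZ horner_prod.
case: r Dr rootsG => [|z r] Dr rootsG.
  have : (size G <= 1)%N.
    by rewrite Dr big_nil; apply: leq_trans (size_scale_leq _ _) _; rewrite size_poly1.
  by rewrite sG leqNgt sg.
rewrite big_cons hornerXsubC => hg.
rewrite -(ltr_nat algC) natr_absz intr_norm hg !normrM normr_prod.
have d1 : 1 <= d%:R :> algC by rewrite (ler_nat algC 1 d).
have P1 : 1 <= \prod_(i <- r) `|('X - i%:P).[n%:R]| :> algC.
  rewrite big_seq; apply: (big_ind (fun x : algC => 1 <= x)) => //.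
    by move=> x y; apply: mulr_ege1.
  move=> i ir; rewrite hornerXsubC; apply: (le_trans d1); apply: ltW.
  by apply: rootsG; rewrite inE ir orbT.
have hz : d%:R < `|n%:R - z| :> algC by apply: rootsG; rewrite inE eqxx.
apply: (lt_le_trans hz).
apply: le_trans (ler_peMl _ lc1).
  by apply: ler_peMr => //.
by apply: mulr_ge0 => //; apply: (le_trans ler01 P1).
Qed.
Lemma const_unit (f g h : {poly int}) :
  \big[gcdn/0%N]_(i < size f) absz (f`_i) = 1%N -> f != 0 ->
  f = g * h -> (size g <= 1)%N -> g \is a GRing.unit.
Proof.
move=> pf f0 fE sg.
set c := g`_0.
have gE : g = c%:P by apply: size1_polyC.
have c0 : c != 0.
  apply: contraNneq f0 => c0; by rewrite fE gE c0 mul0r.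
have dv : (absz c %| 1)%N.
  rewrite -pf; apply: (big_ind (fun x => absz c %| x)%N) => //.
    by move=> x y hx hy; rewrite dvdn_gcd hx hy.
  move=> i _; have -> : f`_i = c * h`_i by move: (nat_of_ord i) => m; rewrite fE gE coefCM.
  rewrite abszM; apply: dvdn_mulr.
  by [].
have c1 : absz c = 1%N by move: dv; rewrite dvdn1 => /eqP.
rewrite gE poly_unitE size_polyC c0 /= coefC /=.
apply/unitrPr; exists c.
have H1 : forall x : int, absz x = 1%N -> x * x = 1 by case=> [[|[|k]]|[|k]].
by apply: H1.
Qed.

Lemma nat_final1 (G H d p : nat) : prime p -> (0 < d)%N -> (d < G)%N -> (d < H)%N -> (G * H = d * p)%N -> False.
Proof.
move=> pp d0 dG dH E.
have p0 : (0 < p)%N by apply: prime_gt0.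
have : (p %| G * H)%N by rewrite E dvdn_mull.
rewrite Euclid_dvdM // => /orP [/dvdnP [e eE]|/dvdnP [e eE]]; subst.
  have : (e * H = d)%N.
    by apply/eqP; rewrite -(eqn_pmul2r p0); apply/eqP; rewrite -E; lia.
  move=> eH; have e0 : (0 < e)%N by rewrite lt0n; apply/negP => /eqP ez; move: eH; rewrite ez; lia.
  have := leq_pmull H e0; lia.
have : (G * e = d)%N.
  by apply/eqP; rewrite -(eqn_pmul2r p0); apply/eqP; rewrite -E; lia.
move=> eH; have e0 : (0 < e)%N by rewrite lt0n; apply/negP => /eqP ez; move: eH; rewrite ez; lia.
have := leq_pmulr G e0; lia.
Qed.

Lemma nat_final2 (G H d p k D : nat) : prime p -> (0 < k)%N -> (0 < d)%N -> (d < G)%N -> (d < H)%N ->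
  (G * H = d * p ^ k)%N -> coprime (p ^ k) D -> ((p %| G) -> (p %| H) -> (p %| D))%N -> False.
Proof.
move=> pp k0 d0 dG dH E cD hD.
have pk0 : (0 < p ^ k)%N by rewrite expn_gt0 prime_gt0.
have npD : ~~ (p %| D)%N by rewrite -prime_coprime // -(coprime_pexpl _ _ k0).
have : (p ^ k %| G * H)%N by rewrite E dvdn_mull.
case: (boolP (p %| H)%N) => pH.
  have npG : ~~ (p %| G)%N by apply: contra npD => pG; apply: hD.
  have cG : coprime (p ^ k) G by rewrite coprime_pexpl // prime_coprime.
  rewrite Gauss_dvdr // => /dvdnP [e eE]; subst.
  have : (G * e = d)%N.
    by apply/eqP; rewrite -(eqn_pmul2r pk0); apply/eqP; rewrite -E; lia.
  move=> eH; have e0 : (0 < e)%N by rewrite lt0n; apply/negP => /eqP ez; move: eH; rewrite ez; lia.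
  have := leq_pmulr G e0; lia.
have cH : coprime (p ^ k) H by rewrite coprime_pexpl // prime_coprime.
rewrite Gauss_dvdl // => /dvdnP [e eE]; subst.
have : (e * H = d)%N.
  by apply/eqP; rewrite -(eqn_pmul2r pk0); apply/eqP; rewrite -E; lia.
move=> eH; have e0 : (0 < e)%N by rewrite lt0n; apply/negP => /eqP ez; move: eH; rewrite ez; lia.
have := leq_pmull H e0; lia.
Qed.

Unset Implicit Arguments.

Theorem corollary5 (R : realType) (f : {poly int}) (alpha beta : R) (j n d : nat) :
  primitive_poly f ->
  0 < alpha -> alpha < beta ->
  (j < size f)%N ->
  \sum_(i < size f | i != j :> nat) (`|f`_i|%:~R * beta ^+ i)
    < `|f`_j|%:~R * alpha ^+ j ->
  (0 < n)%N -> (0 < d)%N ->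
  alpha + d%:R <= n%:R -> n%:R <= beta - d%:R ->
  ((exists p : nat, prime p /\ `|f.[n%:Z]|%N = (d * p)%N) \/
   (exists p k : nat, [/\ prime p, (0 < k)%N, `|f.[n%:Z]|%N = (d * p ^ k)%N
                      & coprime (p ^ k) `|(f^`()).[n%:Z]|%N])) ->
  irreducible_Zpoly f.
Proof.
move=> pf a0 ab jlt H n0 d0 hn1 hn2 hP.
have f0 : f != 0 by rewrite -size_poly_eq0 -lt0n; apply: leq_ltn_trans jlt.
have dn : (d < n)%N.
  rewrite -(ltr_nat R); lra.
have Hint : \sum_(i < size f | i != j :> nat) `|f`_i| * ((n + d)%N%:Z) ^+ i
      < `|f`_j| * ((n - d)%N%:Z) ^+ j.
  rewrite -(ltr_int R) rmorph_sum /= rmorphM rmorphXn /=.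
  apply: le_lt_trans (lt_le_trans H _).
    apply: ler_sum => i _; rewrite rmorphM rmorphXn /=.
    apply: ler_wpM2l; first by rewrite ler0z.
    apply: lerXn2r; rewrite ?nnegrE ?ler0n //; first lra.
    rewrite -pmulrn natrD; lra.
  apply: ler_wpM2l; first by rewrite ler0z.
  apply: lerXn2r; rewrite ?nnegrE ?ler0n //; first lra.
  rewrite -pmulrn natrB; [lra | exact: ltnW].
have Hroot : forall z : algC, root (map_poly intr f) z -> d%:R < `|n%:R - z|.
  move=> z rz; have [h|h] := @root_far f j (n - d) (n + d) jlt Hint z rz.
    have e : d%:R = n%:R - (n - d)%N%:R :> algC.
      by rewrite natrB ?(ltnW dn) //; ring.
    rewrite e; apply: (lt_le_trans _ (lerB_dist _ _)).
    by rewrite normr_nat ltrD2l ltrN2.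
  have e : d%:R = (n + d)%N%:R - n%:R :> algC by rewrite natrD; ring.
  rewrite e distrC; apply: (lt_le_trans _ (lerB_dist _ _)).
  by rewrite normr_nat ltrD2r.
split => //; split.
  apply/negP => fu.
  have f1 : `|f.[n%:Z]|%N = 1%N.
    move: fu; rewrite poly_unitE => /andP [/eqP s1 /unitrPr [y xy]].
    rewrite (@size1_polyC _ f) ?s1 // hornerC.
    have := congr1 absz xy; rewrite abszM /= => /eqP; rewrite muln_eq1.
    by case/andP => /eqP.
  case: hP => [[p [pp E]]|[p [k [pp k0 E cD]]]].
    have := prime_gt1 pp; move: E; rewrite f1; lia.
  have pk : (p <= p ^ k)%N by rewrite -{1}(expn1 p); apply: leq_pexp2l; [exact: prime_gt0|].
  have p1 := prime_gt1 pp; have dq := leq_pmull (p ^ k)%N d0.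
  rewrite f1 in E; rewrite -E in dq; lia.
move=> g h fE.
case: (leqP (size g) 1) => sg; first by left; apply: (@const_unit f g h pf f0 fE sg).
have fE' : f = h * g by rewrite mulrC.
case: (leqP (size h) 1) => sh; first by right; apply: (@const_unit f h g pf f0 fE' sh).
exfalso.
have dG := @factor_big f g h n d fE sg d0 Hroot.
have dH := @factor_big f h g n d fE' sh d0 Hroot.
have fn : `|f.[n%:Z]|%N = (`|g.[n%:Z]| * `|h.[n%:Z]|)%N by rewrite fE hornerM abszM.
case: hP => [[p [pp E]]|[p [k [pp k0 E cD]]]].
  by apply: (@nat_final1 _ _ d p pp d0 dG dH); rewrite -fn.
apply: (@nat_final2 _ _ d p k _ pp k0 d0 dG dH _ cD); first by rewrite -fn.
move=> pG pH; rewrite fE derivM hornerD !hornerM.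
have pG' : (p%:Z %| g.[n%:Z])%Z by rewrite dvdzE.
have pH' : (p%:Z %| h.[n%:Z])%Z by rewrite dvdzE.
suff : (p%:Z %| (g^`()).[n%:Z] * h.[n%:Z] + g.[n%:Z] * (h^`()).[n%:Z])%Z by rewrite dvdzE.
by apply: rpredD; [apply: dvdz_mull | apply: dvdz_mulr].
Qed.
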